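(* Let $\mathcal{C}_1$ and $\mathcal{C}_2$ be hypergraphs on disjoint vertex sets $V_1$ and $V_2$. Let $\mathcal{C}(\operatorname{Ind}(\mathcal{C}_1)*\operatorname{Ind}(\mathcal{C}_2))$ be the hypergraph of minimal non-faces of the join $\operatorname{Ind}(\mathcal{C}_1)*\operatorname{Ind}(\mathcal{C}_2)$ (a complex on $V_1\cup V_2$; this hypergraph has edge set $\mathcal{C}_1\cup\mathcal{C}_2$). Then $\psi(\mathcal{C}(\operatorname{Ind}(\mathcal{C}_1)*\operatorname{Ind}(\mathcal{C}_2)))=\psi(\mathcal{C}_1)+\psi(\mathcal{C}_2)$ (with $\infty+a=\infty$).
   Context: A hypergraph $\mathcal{C}$ on a finite vertex set $V$ is a family of pairwise incomparable subsets of $V$ (its edges), each of cardinality at least $2$; vertices lying in no edge are allowed. The independence complex $\operatorname{Ind}(\mathcal{C})$ is the simplicial complex on $V$ whose faces are the subsets of $V$ containing no edge of $\mathcal{C}$. For a simplicial complex $\Delta$ on $V$ (containing all singletons), $\mathcal{C}(\Delta)$ is the hypergraph on $V$ of inclusion-minimal non-faces of $\Delta$; $\operatorname{Ind}(\mathcal{C}(\Delta))=\Delta$. For an edge $F$: $\mathcal{C}-F$ is the hypergraph on $V$ with edge set $\mathcal{C}\setminus\{F\}$; $N_{\mathcal{C}}(F)=\bigcup\{E\setminus F : E\in\mathcal{C},\ |E\setminus F|=1\}$; and $\mathcal{C}:F$ is the hypergraph on $V\setminus(F\cup N_{\mathcal{C}}(F))$ whose edges are the members of cardinality at least $2$ among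 the inclusion-minimal members of the family $\{E\setminus F : E\in \mathcal{C}-F\}$. The number $\psi(\mathcal{C})\in\mathbb{Z}_{\ge 0}\cup\{\infty\}$ is defined recursively: $\psi(\mathcal{C})=0$ if $V=\emptyset$; $\psi(\mathcal{C})=\infty$ if $V\neq\emptyset$ and $\mathcal{C}$ has no edges; otherwise $\psi(\mathcal{C})=\max_{F\in\mathcal{C}}\min\{\psi(\mathcal{C}-F),\ \psi(\mathcal{C}:F)+|F|-1\}$. *)

(* Defs.v *)
From mathcomp Require Import all_boot.
Set Implicit Arguments. Unset Strict Implicit. Unset Printing Implicit Defensive.

(* Values in Z_{>=0} \cup {oo}: [Some n] is n, [None] is oo. *)
Definition ext_nat := option nat.

Definition emin (a b : ext_nat) : ext_nat :=
  match a, b with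
  | None, _ => b
  | _, None => a
  | Some m, Some n => Some (minn m n)
  end.

Definition emax (a b : ext_nat) : ext_nat :=
  match a, b with
  | None, _ => None
  | _, None => None
  | Some m, Some n => Some (maxn m n)
  end.

Definition eadd (a b : ext_nat) : ext_nat :=
  match a, b with
  | Some m, Some n => Some (m + n)
  | _, _ => None
  end.

Section Hyp.
Variable T : finType.

Definition is_hypergraph (V : {set T}) (E : {set {set T}}) : Prop :=
  (forall F, F \in E -> F \subset V) /\
  (forall F, F \in E -> 2 <= #|F|) /\
  (forall F G, F \in E -> G \in E -> F \subset G -> F = G).

Definition nbhd (E : {set {set T}}) (F : {set T}) : {set T} :=
  \bigcup_(G in E | #|G :\: F| == 1) (G :\: F).

Definition colon_V (V : {set T}) (E : {set {set T}}) (F : {set T}) : {set T} :=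
  V :\: (F :|: nbhd E F).

Definition colon_E (E : {set {set T}}) (F : {set T}) : {set {set T}} :=
  let D := [set G :\: F | G in E :\ F] in
  [set H in D | [forall H' in D, (H' \subset H) ==> (H' == H)] && (2 <= #|H|)].

(* psi with fuel; the fuel #|E| suffices since both recursive calls
   have strictly fewer edges. *)
Fixpoint psi_fuel (n : nat) (V : {set T}) (E : {set {set T}}) : ext_nat :=
  if V == set0 then Some 0
  else if E == set0 then None
  else match n with
       | 0 => None
       | n'.+1 =>
         \big[emax/Some 0]_(F in E)
           emin (psi_fuel n' V (E :\ F))
                (eadd (psi_fuel n' (colon_V V E F) (colon_E E F))
                      (Some (#|F| - 1)))
       end.

Definition psi (V : {set T}) (E : {set {set T}}) : ext_nat := psi_fuel #|E| V E.

Definition Ind (V : {set T}) (E : {set {set T}}) : {set {set T}} :=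
  [set S : {set T} | (S \subset V) && [forall G in E, ~~ (G \subset S)]].

(* join of complexes (on disjoint vertex sets) *)
Definition cjoin (D1 D2 : {set {set T}}) : {set {set T}} :=
  [set S1 :|: S2 | S1 in D1, S2 in D2].

Definition min_nonfaces (V : {set T}) (D : {set {set T}}) : {set {set T}} :=
  [set S : {set T} | [&& S \subset V, S \notin D & [forall x in S, (S :\ x) \in D]]].

End Hyp.

(* Main.v *)
From HB Require Import structures.
Require Import Defs.
From mathcomp Require Import all_boot zify.
Set Implicit Arguments. Unset Strict Implicit. Unset Printing Implicit Defensive.

Lemma emaxA : associative emax.
Proof. by case=> [a|] [b|] [c|] //=; rewrite maxnA. Qed.
Lemma emaxC : commutative emax.
Proof. by case=> [a|] [b|] //=; rewrite maxnC. Qed.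
Lemma emax0l : left_id (Some 0) emax.
Proof. by case=> [a|] //=; rewrite max0n. Qed.
HB.instance Definition _ := Monoid.isComLaw.Build ext_nat (Some 0) emax emaxA emaxC emax0l.

Lemma eaddC a b : eadd a b = eadd b a.
Proof. by case: a b => [a|] [b|] //=; rewrite addnC. Qed.
Lemma eadd0r a : eadd a (Some 0) = a.
Proof. by case: a => [a|] //=; rewrite addn0. Qed.
Lemma eaddNr a : eadd a None = None.
Proof. by case: a. Qed.
Lemma emax_id a : emax a a = a.
Proof. by case: a => [a|] //=; rewrite maxnn. Qed.
Lemma eadd_emaxl a b c : eadd (emax a b) c = emax (eadd a c) (eadd b c).
Proof. case: a b c => [a|] [b|] [c|] //=; congr Some; lia. Qed.
Lemma emin_eadd a b c k :
  emin (eadd a c) (eadd (eadd b c) k) = eadd (emin a (eadd b k)) c.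
Proof. case: a b c k => [a|] [b|] [c|] [k|] //=; congr Some; lia. Qed.

Lemma bigL (I : finType) (P : pred I) (f : I -> ext_nat) c a :
  emax (eadd a c) (\big[emax/Some 0]_(i | P i) eadd (f i) c)
  = eadd (emax a (\big[emax/Some 0]_(i | P i) f i)) c.
Proof.
move: a; apply: (big_rec2 (fun x y => forall a, emax (eadd a c) x = eadd (emax a y) c)).
  by case=> [a|]; case: c => [c|] //=; congr Some; lia.
by move=> i x y _ IH a; rewrite emaxA -eadd_emaxl IH emaxA.
Qed.

Lemma bigN (T : finType) (E : {set T}) (f : T -> ext_nat) c : E != set0 ->
  \big[emax/Some 0]_(F in E) eadd (f F) c = eadd (\big[emax/Some 0]_(F in E) f F) c.
Proof.
case/set0Pn=> F0 F0E.
by rewrite (bigD1 F0) //= [in RHS](bigD1 F0) //= bigL.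
Qed.

Section Psi.
Variable T : finType.
Implicit Types (V : {set T}) (E : {set {set T}}) (F : {set T}).

Lemma card_colonE E F : #|colon_E E F| <= #|E :\ F|.
Proof.
rewrite /colon_E; apply: leq_trans (leq_imset_card (fun G => G :\: F) _).
by apply: subset_leq_card; apply/subsetP => H; rewrite inE => /and3P[].
Qed.

Lemma psi_fuelE n m V E : #|E| <= n -> #|E| <= m -> psi_fuel n V E = psi_fuel m V E.
Proof.
elim: n m V E => [|n IH] [|m] V E hn hm //=.
all: try (by move: hn; rewrite leqn0 cards_eq0 => /eqP->; rewrite eqxx).
all: try (by move: hm; rewrite leqn0 cards_eq0 => /eqP->; rewrite eqxx).
case: (V == set0) => //; case: (E == set0) => //.
apply: eq_bigr => F FE.
have h1 : #|E :\ F| <= n by move: hn; rewrite (cardsD1 F) FE.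
have h2 : #|E :\ F| <= m by move: hm; rewrite (cardsD1 F) FE.
have h3 := card_colonE E F.
congr emin; first exact: IH.
by congr eadd; apply: IH; apply: leq_trans h3 _.
Qed.

Definition term V E F := emin (psi V (E :\ F))
  (eadd (psi (colon_V V E F) (colon_E E F)) (Some (#|F| - 1))).

Lemma psiE V E : psi V E = if V == set0 then Some 0 else if E == set0 then None
  else \big[emax/Some 0]_(F in E) term V E F.
Proof.
rewrite /psi; move En: #|E| => n; case: n En => [|n] En /=.
  by move/eqP: En; rewrite cards_eq0 => ->.
have : E != set0 by rewrite -card_gt0 En.
move/negbTE => ->; case: (V == set0) => //.
apply: eq_bigr => F FE; rewrite /term /psi.
have h1 : #|E :\ F| <= n by move: En; rewrite (cardsD1 F) FE => [[<-]].
have h3 := card_colonE E F.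
congr emin; first exact: psi_fuelE.
by congr eadd; apply: psi_fuelE => //; apply: leq_trans h3 _.
Qed.
End Psi.

Section Split.
Variable T : finType.
Implicit Types (V : {set T}) (E : {set {set T}}) (F G H : {set T}).

Lemma cross V1 V2 (A : {set T}) : [disjoint V1 & V2] -> A \subset V1 -> A \subset V2 -> A = set0.
Proof.
by move=> d s1 s2; apply/eqP; rewrite -subset0 -(disjoint_setI0 d) subsetI s1 s2.
Qed.

Lemma hyp_D1 V E F : is_hypergraph V E -> is_hypergraph V (E :\ F).
Proof.
case=> s [c a]; split; [|split].
- by move=> G /setD1P[_ /s].
- by move=> G /setD1P[_ /c].
- by move=> G H /setD1P[_ GE] /setD1P[_ HE]; apply: a.
Qed.



Lemma D1_prop V E F H : is_hypergraph V E -> F \in E ->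
  H \in [set G :\: F | G in E :\ F] -> (H \subset V) /\ (H != set0).
Proof.
case=> s [c a] FE /imsetP[G /setD1P[GF GE] ->]; split.
  exact: subset_trans (subsetDl G F) (s _ GE).
rewrite setD_eq0; apply/negP => GsF; move: GF.
by rewrite (a _ _ GE FE GsF) eqxx.
Qed.

Lemma colon_hyp V E F : is_hypergraph V E -> F \in E ->
  is_hypergraph (colon_V V E F) (colon_E E F).
Proof.
move=> hE FE; have [s [c a]] := hE.
split; [|split].
- move=> H; rewrite /colon_E inE => /and3P[HD /forallP min c2].
  have [HV _] := D1_prop hE FE HD.
  move: HD => /imsetP[G /setD1P[GF GE] HG].
  apply/subsetP => x xH; rewrite /colon_V !inE (subsetP HV _ xH) andbT.
  have xF : x \notin F by move: xH; rewrite HG inE => /andP[].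
  rewrite (negbTE xF) /=; apply/negP => /bigcupP[G' /andP[G'E /cards1P[y Gy]] xG'].
  move: xG'; rewrite Gy inE => /eqP exy; subst y.
  have G'D : [set x] \in [set G :\: F | G in E :\ F].
    rewrite -Gy; apply: imset_f; rewrite !inE G'E andbT.
    apply/negP => /eqP eG; move: Gy; rewrite eG setDv => /setP/(_ x).
    by rewrite !inE eqxx.
  move: (min [set x]); rewrite G'D /= sub1set xH /= => /eqP eH.
  by move: c2; rewrite -eH cards1.
- by move=> H; rewrite /colon_E inE => /and3P[].
- move=> H H' HE H'E sub; move: H'E; rewrite /colon_E inE => /and3P[_ /forallP min _].
  move: HE; rewrite inE => /and3P[HD _ _].
  by move: (min H); rewrite HD sub => /eqP.
Qed.

Lemma colonV_sub V E F : colon_V V E F \subset V.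
Proof. exact: subsetDl. Qed.

Lemma card_colonE_lt E F : F \in E -> #|colon_E E F| < #|E|.
Proof. by move=> FE; rewrite (cardsD1 F E) FE add1n ltnS card_colonE. Qed.

Lemma card_D1_lt E F : F \in E -> #|E :\ F| < #|E|.
Proof. by move=> FE; rewrite (cardsD1 F E) FE. Qed.

Variables (V1 V2 : {set T}) (E1 E2 : {set {set T}}).
Hypotheses (h1 : is_hypergraph V1 E1) (h2 : is_hypergraph V2 E2)
  (hd : [disjoint V1 & V2]).

Lemma E12_notin G : G \in E1 -> G \notin E2.
Proof.
move=> GE1; apply/negP => GE2; have [s1 [c1 _]] := h1; have [s2 _] := h2.
by move: (c1 _ GE1); rewrite (cross hd (s1 _ GE1) (s2 _ GE2)) cards0.
Qed.

Lemma E12_disj : [disjoint E1 & E2].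
Proof.
rewrite -setI_eq0; apply/eqP/setP => G; rewrite !inE.
by apply/negbTE/negP => /andP[/E12_notin/negP].
Qed.

Variable F : {set T}.
Hypothesis FE1 : F \in E1.

Lemma E2F G : G \in E2 -> G :\: F = G.
Proof.
move=> GE2; have [s1 _] := h1; have [s2 _] := h2.
apply/setDidPl; rewrite disjoint_sym.
exact: disjointWl (s1 _ FE1) (disjointWr (s2 _ GE2) hd).
Qed.

Lemma ED : (E1 :|: E2) :\ F = (E1 :\ F) :|: E2.
Proof.
apply/setP => G; rewrite !inE; case: eqP => // ->.
by rewrite (negbTE (E12_notin FE1)).
Qed.

Lemma nbhdU : nbhd (E1 :|: E2) F = nbhd E1 F.
Proof.
have [_ [c2 _]] := h2.
apply/setP => x; apply/bigcupP/bigcupP => [[G /andP[GE c] xG]|[G /andP[GE c] xG]].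
  exists G => //; move: GE; rewrite inE => /orP[GE|GE]; first by rewrite GE.
  by move: c (c2 _ GE); rewrite E2F // => /eqP->.
by exists G => //; rewrite inE GE.
Qed.

Lemma nbhd_sub : nbhd E1 F \subset V1.
Proof.
have [s1 _] := h1; apply/subsetP => x /bigcupP[G /andP[GE _] xG].
by apply: (subsetP (s1 _ GE)); move: xG; rewrite inE => /andP[].
Qed.

Lemma colonVU : colon_V (V1 :|: V2) (E1 :|: E2) F = colon_V V1 E1 F :|: V2.
Proof.
have [s1 _] := h1.
apply/setP => x; rewrite /colon_V nbhdU !inE.
case xV2: (x \in V2); last by rewrite !orbF.
have xV1 : x \in V1 = false by apply: (disjointFl hd).
have xF : x \in F = false by apply/negP => /(subsetP (s1 _ FE1)); rewrite xV1.
have xN : x \in nbhd E1 F = false by apply/negP => /(subsetP nbhd_sub); rewrite xV1.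
by rewrite xF xN.
Qed.

Lemma DU : [set G :\: F | G in (E1 :|: E2) :\ F] = [set G :\: F | G in E1 :\ F] :|: E2.
Proof.
rewrite ED imsetU; congr (_ :|: _).
by rewrite (@eq_in_imset _ _ _ (fun G => G)) ?imset_id // => G; apply: E2F.
Qed.

Lemma colonEU : colon_E (E1 :|: E2) F = colon_E E1 F :|: E2.
Proof.
have [s2 [c2 a2]] := h2.
rewrite /colon_E DU; set D1 := [set G :\: F | G in E1 :\ F].
apply/setP => H; rewrite [in RHS]in_setU [in RHS]in_set [in LHS]in_set [in LHS]in_setU; apply/idP/idP.
  case/and3P=> /orP[HD1|HE2] /forallP min cH; last by rewrite HE2 orbT.
  apply/orP; left; rewrite HD1 cH andbT /=; apply/forallP => H'; apply/implyP => H'D1.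
  by move: (min H'); rewrite inE H'D1.
case/orP => [/and3P[HD1 /forallP min cH] | HE2].
  rewrite HD1 cH /= andbT; apply/forallP => H'; apply/implyP; rewrite inE.
  case/orP=> [H'D1|H'E2]; first by move: (min H'); rewrite H'D1.
  apply/implyP => sub; have [HV _] := D1_prop h1 FE1 HD1.
  by move: (c2 _ H'E2); rewrite (cross hd (subset_trans sub HV) (s2 _ H'E2)) cards0.
rewrite HE2 orbT c2 // andbT /=; apply/forallP => H'; apply/implyP; rewrite inE.
case/orP=> [H'D1|H'E2]; apply/implyP => sub.
  have [H'V H'0] := D1_prop h1 FE1 H'D1.
  by move: H'0; rewrite (cross hd H'V (subset_trans sub (s2 _ HE2))) eqxx.
by apply/eqP; apply: a2.
Qed.

Lemma term_split :
  (forall V1' E1', is_hypergraph V1' E1' -> V1' \subset V1 -> #|E1'| < #|E1| ->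
     psi (V1' :|: V2) (E1' :|: E2) = eadd (psi V1' E1') (psi V2 E2)) ->
  term (V1 :|: V2) (E1 :|: E2) F = eadd (term V1 E1 F) (psi V2 E2).
Proof.
move=> IH; rewrite /term ED colonVU colonEU.
rewrite IH ?(hyp_D1 _ h1) ?card_D1_lt //.
rewrite IH ?colon_hyp ?colonV_sub ?card_colonE_lt //.
- exact: emin_eadd.
- exact: colon_hyp.
- exact: hyp_D1.
Qed.

End Split.

Section Main.
Variable T : finType.
Implicit Types (V : {set T}) (E : {set {set T}}) (F G H : {set T}).

Lemma V_of_E V E : is_hypergraph V E -> E != set0 -> V != set0.
Proof.
case=> s [c _] /set0Pn[G GE]; have: G != set0 by rewrite -card_gt0; apply: ltnW (c _ GE).
case/set0Pn=> x xG; apply/set0Pn; exists x; exact: subsetP (s _ GE) _ xG.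
Qed.

Lemma half V1 V2 E1 E2 : is_hypergraph V1 E1 -> is_hypergraph V2 E2 ->
  [disjoint V1 & V2] ->
  (forall V1' E1', is_hypergraph V1' E1' -> V1' \subset V1 -> #|E1'| < #|E1| ->
     psi (V1' :|: V2) (E1' :|: E2) = eadd (psi V1' E1') (psi V2 E2)) ->
  E1 != set0 ->
  \big[emax/Some 0]_(F in E1) term (V1 :|: V2) (E1 :|: E2) F
  = eadd (psi V1 E1) (psi V2 E2).
Proof.
move=> h1 h2 hd IH E10.
rewrite (eq_bigr (fun F => eadd (term V1 E1 F) (psi V2 E2))); last first.
  by move=> F FE; apply: term_split.
by rewrite bigN // [psi V1 E1]psiE (negbTE E10) (negbTE (V_of_E h1 E10)).
Qed.

Lemma step V1 V2 E1 E2 : is_hypergraph V1 E1 -> is_hypergraph V2 E2 ->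
  [disjoint V1 & V2] ->
  (forall V1' V2' E1' E2', #|E1'| + #|E2'| < #|E1| + #|E2| ->
     is_hypergraph V1' E1' -> is_hypergraph V2' E2' -> [disjoint V1' & V2'] ->
     psi (V1' :|: V2') (E1' :|: E2') = eadd (psi V1' E1') (psi V2' E2')) ->
  psi (V1 :|: V2) (E1 :|: E2) = eadd (psi V1 E1) (psi V2 E2).
Proof.
move=> h1 h2 hd IH.
case: (boolP ((E1 == set0) && (E2 == set0))) => [/andP[/eqP e1 /eqP e2] | E0].
  subst; rewrite setU0 !psiE setU_eq0 eqxx /=.
  by case: (V1 == set0); case: (V2 == set0).
have E12 : E1 :|: E2 != set0 by rewrite setU_eq0.
have V12 : V1 :|: V2 != set0.
  by rewrite setU_eq0 negb_and; case/nandP: E0 => [/(V_of_E h1)|/(V_of_E h2)] ->; rewrite ?orbT.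
rewrite psiE (negbTE V12) (negbTE E12).
rewrite (eq_bigl [predU E1 & E2]); last by move=> F; rewrite !inE.
rewrite bigU ?(E12_disj h1 h2 hd) //.
have IH1 : forall V1' E1', is_hypergraph V1' E1' -> V1' \subset V1 -> #|E1'| < #|E1| ->
     psi (V1' :|: V2) (E1' :|: E2) = eadd (psi V1' E1') (psi V2 E2).
  move=> V1' E1' h' sub lt; apply: IH => //; first by rewrite ltn_add2r.
  exact: disjointWl sub hd.
have IH2 : forall V2' E2', is_hypergraph V2' E2' -> V2' \subset V2 -> #|E2'| < #|E2| ->
     psi (V2' :|: V1) (E2' :|: E1) = eadd (psi V2' E2') (psi V1 E1).
  move=> V2' E2' h' sub lt; rewrite setUC [E2' :|: E1]setUC eaddC.
  apply: IH => //; first by rewrite ltn_add2l.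
  exact: disjointWr sub hd.
have H1 : \big[emax/Some 0]_(F in E1) term (V1 :|: V2) (E1 :|: E2) F
   = if E1 == set0 then Some 0 else eadd (psi V1 E1) (psi V2 E2).
  case: eqP => [->|/eqP E10]; first by rewrite big_set0.
  exact: (half h1 h2 hd IH1 E10).
have H2 : \big[emax/Some 0]_(F in E2) term (V1 :|: V2) (E1 :|: E2) F
   = if E2 == set0 then Some 0 else eadd (psi V1 E1) (psi V2 E2).
  case: eqP => [->|/eqP E20]; first by rewrite big_set0.
  rewrite setUC [E1 :|: E2]setUC eaddC.
  by apply: (half h2 h1 _ IH2 E20); rewrite disjoint_sym.
rewrite H1 H2; move: E0.
case: (E1 == set0); case: (E2 == set0) => // _.
- exact: emax0l.
- by case: (eadd (psi V1 E1) (psi V2 E2)) => [x|] //; rewrite /= maxn0.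
- exact: emax_id.
Qed.

Lemma main n V1 V2 E1 E2 : #|E1| + #|E2| <= n ->
  is_hypergraph V1 E1 -> is_hypergraph V2 E2 -> [disjoint V1 & V2] ->
  psi (V1 :|: V2) (E1 :|: E2) = eadd (psi V1 E1) (psi V2 E2).
Proof.
elim: n V1 V2 E1 E2 => [|n IHn] V1 V2 E1 E2 hn h1 h2 hd; apply: step => //.
  by move=> V1' V2' E1' E2'; rewrite leqn0 in hn; rewrite (eqP hn).
move=> V1' V2' E1' E2' lt; apply: IHn.
by rewrite -ltnS; exact: leq_trans lt hn.
Qed.

End Main.

Section MNF.
Variable T : finType.
Variables (V1 V2 : {set T}) (E1 E2 : {set {set T}}).
Hypotheses (h1 : is_hypergraph V1 E1) (h2 : is_hypergraph V2 E2)
  (hd : [disjoint V1 & V2]).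

Lemma antichainU (G S : {set T}) : G \in E1 :|: E2 -> S \in E1 :|: E2 -> G \subset S -> G = S.
Proof.
have [s1 [c1 a1]] := h1; have [s2 [c2 a2]] := h2.
rewrite !inE => /orP[GE|GE] /orP[SE|SE] sub; first exact: a1.
- by move: (c1 _ GE); rewrite (cross hd (s1 _ GE) (subset_trans sub (s2 _ SE))) cards0.
- by move: (c2 _ GE); rewrite (cross hd (subset_trans sub (s1 _ SE)) (s2 _ GE)) cards0.
- exact: a2.
Qed.

Lemma faceE (S : {set T}) : (S \in cjoin (Ind V1 E1) (Ind V2 E2)) =
  (S \subset V1 :|: V2) && [forall G in E1 :|: E2, ~~ (G \subset S)].
Proof.
have [s1 _] := h1; have [s2 _] := h2.
apply/idP/idP.
  case/imset2P => S1 S2; rewrite !inE => /andP[sub1 /forallP n1] /andP[sub2 /forallP n2] ->.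
  rewrite setUSS //=; apply/forallP => G; apply/implyP; rewrite inE => /orP[GE|GE];
    apply/negP => sub.
  - move: (n1 G); rewrite GE /= => /negP; apply; apply/subsetP => x xG.
    have xV1 := subsetP (s1 _ GE) _ xG.
    move: (subsetP sub _ xG); rewrite inE => /orP[//|/(subsetP sub2) xV2].
    by rewrite (disjointFr hd xV1) in xV2.
  - move: (n2 G); rewrite GE /= => /negP; apply; apply/subsetP => x xG.
    have xV2 := subsetP (s2 _ GE) _ xG.
    move: (subsetP sub _ xG); rewrite inE => /orP[/(subsetP sub1) xV1|//].
    by rewrite (disjointFr hd xV1) in xV2.
case/andP => sub /forallP nS.
have -> : S = (S :&: V1) :|: (S :&: V2) by rewrite -setIUr; apply/esym/setIidPl.
apply: imset2_f.
  rewrite inE subsetIr /=; apply/forallP => G; apply/implyP => GE; apply/negP => GS.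
  by move: (nS G); rewrite inE GE (subset_trans GS (subsetIl _ _)).
rewrite inE subsetIr /=; apply/forallP => G; apply/implyP => GE; apply/negP => GS.
by move: (nS G); rewrite inE GE orbT (subset_trans GS (subsetIl _ _)).
Qed.

Lemma mnfE : min_nonfaces (V1 :|: V2) (cjoin (Ind V1 E1) (Ind V2 E2)) = E1 :|: E2.
Proof.
have [s1 _] := h1; have [s2 _] := h2.
apply/setP => S; rewrite inE; apply/idP/idP.
  case/and3P => sub; rewrite faceE sub /= negb_forall => /existsP[G].
  rewrite negb_imply negbK => /andP[GE GS] /forallP rem.
  case: (boolP (S \subset G)) => [SG|/subsetPn[x xS xG]].
    by rewrite -(eqP (_ : G == S)) // eqEsubset GS SG.
  move: (rem x); rewrite xS /= faceE => /andP[_ /forallP/(_ G)].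
  by rewrite GE /= subsetD1 GS xG.
move=> SE; have subS : S \subset V1 :|: V2.
  by move: SE; rewrite inE => /orP[/s1|/s2] sub; [rewrite subsetU ?sub | rewrite subsetU ?sub ?orbT].
rewrite subS /= faceE subS /= negb_forall; apply/andP; split.
  by apply/existsP; exists S; rewrite SE subxx.
apply/forallP => x; apply/implyP => xS.
rewrite faceE (subset_trans (subD1set S x) subS) /=.
apply/forallP => G; apply/implyP => GE; apply/negP; rewrite subsetD1 => /andP[GS xG].
by move: xG; rewrite (antichainU GE SE GS) xS.
Qed.

End MNF.

Unset Implicit Arguments.

Theorem proposition3p5 (T : finType) (V1 V2 : {set T}) (E1 E2 : {set {set T}}) :
  is_hypergraph V1 E1 -> is_hypergraph V2 E2 -> [disjoint V1 & V2] ->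
  psi (V1 :|: V2) (min_nonfaces (V1 :|: V2) (cjoin (Ind V1 E1) (Ind V2 E2)))
  = eadd (psi V1 E1) (psi V2 E2).
Proof.
move=> h1 h2 hd; rewrite (mnfE h1 h2 hd).
exact: (main (leqnn _) h1 h2 hd).
Qed.
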